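(* The set $\mathscr Q=\mathbb Q\cap[0,1]$ is $R$-invariant, i.e. $R(\mathscr Q)\subset\mathscr Q$. The only periodic orbits of $R$ contained in $\mathscr Q$ are $C_0=\{0,2/3\}$ and $C_1=\{1,1/3\}$ (both of period $2$). Moreover $\mathscr Q=\mathscr Q_0\cup\mathscr Q_1$ is a disjoint union, where $\mathscr Q_i$ is the set of $x\in\mathscr Q$ whose forward $R$-orbit contains $C_i$, and both $\mathscr Q_0$ and $\mathscr Q_1$ are dense in $[0,1]$.
   Context: Define $\rho$ on binary words: for $b=b_1b_2\dots$, $\rho(b)$ is obtained by deleting every digit $b_n=0$ and replacing every $b_n=1$ by $0$ if $n$ is odd and by $1$ if $n$ is even. For $x\in(0,1]$ let $\beta(x)$ be the unique binary expansion of $x$ with infinitely many $1$'s. Define $R:[0,1]\to[0,1]$ by $R(0)=2/3$ and, for $x\in(0,1]$, $R(x)=\sum_{n\ge1}c_n2^{-n}$ where $c=\rho(\beta(x))$. *)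

(* Defs.v *)
From Stdlib Require Import Reals QArith ClassicalEpsilon ClassicalDescription.
From Coquelicot Require Import Coquelicot.
Open Scope R_scope.

(* Binary words are b : nat -> bool, with digits indexed from 1 (b 0 is ignored). *)

Fixpoint ones (b : nat -> bool) (n : nat) : nat :=
  match n with
  | O => O
  | S m => (ones b m + (if b (S m) then 1 else 0))%nat
  end.

(* rho(b): delete the 0 digits, replace the 1 at position n by 0 (n odd) or 1 (n even).
   If b has only finitely many 1's, the finite word rho(b) is padded with 0's, which
   does not change the value sum c_n 2^-n. *)
Definition rho (b : nat -> bool) (k : nat) : bool :=
  if excluded_middle_informative
       (exists p, (1 <= p)%nat /\ b p = true /\ Nat.even p = true /\ ones b p = k)
  then true else false.

Definition bin_val (b : nat -> bool) : R :=
  Series (fun n => if b (S n) then / 2 ^ (S n) else 0).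

Definition is_beta (x : R) (b : nat -> bool) : Prop :=
  (forall N, exists n, (N <= n)%nat /\ b n = true) /\
  is_series (fun n => if b (S n) then / 2 ^ (S n) else 0) x.

(* beta(x): the (unique for x in (0,1]) binary expansion with infinitely many 1's *)
Definition beta (x : R) : nat -> bool :=
  epsilon (inhabits (fun _ : nat => false)) (is_beta x).

Definition Rmap (x : R) : R :=
  if excluded_middle_informative (x = 0) then 2 / 3 else bin_val (rho (beta x)).

Definition Qset (x : R) : Prop := (exists q : Q, x = Q2R q) /\ 0 <= x <= 1.

Definition in_orbit (x y : R) : Prop := exists k : nat, Nat.iter k Rmap x = y.

Definition Qset0 (x : R) : Prop := Qset x /\ in_orbit x 0 /\ in_orbit x (2/3).
Definition Qset1 (x : R) : Prop := Qset x /\ in_orbit x 1 /\ in_orbit x (1/3).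

(* Main.v *)
Require Import Defs.
From Stdlib Require Import Reals QArith Lia Lra Psatz FunctionalExtensionality ClassicalEpsilon ClassicalDescription Qreals.
From Coquelicot Require Import Coquelicot.
Open Scope R_scope.

Definition V (b : nat -> bool) : R := bin_val b.
Definition term (b : nat -> bool) (n : nat) : R := if b (S n) then / 2 ^ (S n) else 0.

Lemma term_bound b n : 0 <= term b n <= (/2) ^ n.
Proof.
  unfold term. rewrite pow_inv.
  assert (H : 0 < 2 ^ n) by (apply pow_lt; lra).
  assert (H2 : 2 ^ S n = 2 * 2 ^ n) by reflexivity.
  destruct (b (S n)); split.
  - left; apply Rinv_0_lt_compat; rewrite H2; lra.
  - apply Rinv_le_contravar; [lra| rewrite H2; lra].
  - lra.
  - left; apply Rinv_0_lt_compat; lra.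
Qed.

Lemma ex_geom : ex_series (fun n => (/2) ^ n).
Proof. exists (/ (1 - /2)). apply is_series_geom. rewrite Rabs_pos_eq; lra. Qed.

Lemma ex_V b : ex_series (term b).
Proof.
  apply (@ex_series_le R_AbsRing R_CompleteNormedModule _ (fun n => (/2)^n)); [|apply ex_geom].
  intro n. change norm with Rabs. simpl. destruct (term_bound b n).
  rewrite Rabs_pos_eq; lra.
Qed.

Lemma V_series b : is_series (term b) (V b).
Proof. apply Series_correct, ex_V. Qed.

Lemma V_ext b b' : (forall n, (1 <= n)%nat -> b n = b' n) -> V b = V b'.
Proof.
  intro H. unfold V, bin_val. apply Series_ext. intro n.
  rewrite H by lia. reflexivity.
Qed.

Definition shift (b : nat -> bool) : nat -> bool := fun n => b (S n).

Lemma V_cons b : V b = (if b 1%nat then /2 else 0) + V (shift b) / 2.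
Proof.
  unfold V, bin_val. rewrite Series_incr_1 by apply ex_V.
  f_equal.
  - simpl. destruct (b 1%nat); lra.
  - unfold Rdiv. rewrite <- Series_scal_r. apply Series_ext. intro n. unfold shift.
    change (2 ^ S (S n)) with (2 * 2 ^ S n).
    assert (0 < 2 ^ S n) by (apply pow_lt; lra).
    destruct (b (S (S n))); [|lra]. field. lra.
Qed.

Lemma V_nonneg b : 0 <= V b.
Proof.
  unfold V, bin_val.
  assert (E : Series (fun n => 0 * term b n) = 0) by (rewrite Series_scal_l; ring).
  change (0 <= Series (term b)).
  apply Rle_trans with (Series (fun n => 0 * term b n)); [lra|].
  apply Series_le; [|apply ex_V].
  intro n. destruct (term_bound b n). unfold term in *. lra.
Qed.

Lemma V_le1 b : V b <= 1.
Proof.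
  unfold V, bin_val.
  apply Rle_trans with (Series (fun n => (/2)^n * /2)).
  - apply Series_le.
    + intro n. destruct (term_bound b n) as [H1 H2]. split; [exact H1|].
      unfold term. destruct (b (S n)); [|apply Rmult_le_pos; [apply pow_le|]; lra].
      simpl. rewrite Rinv_mult, pow_inv. lra.
    + apply ex_series_scal_r, ex_geom.
  - rewrite Series_scal_r.
    pose proof (is_series_unique _ _ (is_series_geom (/2) ltac:(rewrite Rabs_pos_eq; lra))) as E.
    change (Series (fun n => (/2)^n) * /2 <= 1). rewrite E. lra.
Qed.

Definition IM (b : nat -> bool) : Prop := forall N, exists n, (N <= n)%nat /\ b n = true.

Lemma V_pos_at b n : (1 <= n)%nat -> b n = true -> 0 < V b.
Proof.
  revert b. induction n as [|n IH]; intros b Hn Hb; [lia|].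
  rewrite V_cons. destruct n as [|n].
  - rewrite Hb. pose proof (V_nonneg (shift b)). lra.
  - assert (0 < V (shift b)) by (apply IH; [lia| exact Hb]).
    destruct (b 1%nat); lra.
Qed.

Lemma V_pos b : IM b -> 0 < V b.
Proof. intro H. destruct (H 1%nat) as [n [Hn Hb]]. exact (V_pos_at b n Hn Hb). Qed.

Lemma IM_shift b : IM b -> IM (shift b).
Proof.
  intros H N. destruct (H (S N)) as [n [Hn Hb]].
  exists (pred n). unfold shift. split; [lia|]. replace (S (pred n)) with n by lia. exact Hb.
Qed.

Lemma V_unique b b' : IM b -> IM b' -> V b = V b' -> forall n, (1 <= n)%nat -> b n = b' n.
Proof.
  intros Hb Hb' HV n Hn. revert b b' Hb Hb' HV. induction n as [|n IH]; [lia|].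
  intros b b' Hb Hb' HV.
  rewrite (V_cons b), (V_cons b') in HV.
  pose proof (V_pos _ (IM_shift _ Hb)). pose proof (V_pos _ (IM_shift _ Hb')).
  pose proof (V_le1 (shift b)). pose proof (V_le1 (shift b')).
  assert (E1 : b 1%nat = b' 1%nat).
  { destruct (b 1%nat), (b' 1%nat); auto; lra. }
  destruct n as [|n]; [exact E1|].
  rewrite E1 in HV.
  apply (IH ltac:(lia) (shift b) (shift b')); try apply IM_shift; auto. lra.
Qed.
Lemma beta_spec x b : IM b -> V b = x -> forall n, (1 <= n)%nat -> beta x n = b n.
Proof.
  intros Hb Hx.
  assert (H : is_beta x b) by (split; [exact Hb| rewrite <- Hx; apply V_series]).
  assert (H' : is_beta x (beta x)).
  { unfold beta. apply epsilon_spec. exists b. exact H. }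
  destruct H' as [H1 H2].
  apply V_unique; auto. rewrite Hx. apply is_series_unique. exact H2.
Qed.

Lemma ones_ext b b' : (forall n, (1 <= n)%nat -> b n = b' n) -> forall n, ones b n = ones b' n.
Proof. intros H n. induction n as [|n IH]; simpl; auto. rewrite IH, H by lia. reflexivity. Qed.

Definition rho2 (e : bool) (b : nat -> bool) (k : nat) : Prop :=
  exists p, (1 <= p)%nat /\ b p = true /\ Nat.even p = e /\ ones b p = k.

Lemma rho_iff b k : rho b k = true <-> rho2 true b k.
Proof.
  unfold rho, rho2. destruct (excluded_middle_informative _) as [H|H]; split; intro; auto; try discriminate.
Qed.

Lemma rho2_ext e b b' k : (forall n, (1 <= n)%nat -> b n = b' n) -> (rho2 e b k <-> rho2 e b' k).
Proof.
  intro H. unfold rho2. split; intros [p [H1 [H2 [H3 H4]]]]; exists p;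
  rewrite (ones_ext _ _ H) in *; [rewrite <- H| rewrite H]; auto.
Qed.

Lemma rho_ext b b' : (forall n, (1 <= n)%nat -> b n = b' n) -> rho b = rho b'.
Proof.
  intro H. apply functional_extensionality. intro k.
  destruct (rho b k) eqn:E1, (rho b' k) eqn:E2; auto.
  - apply rho_iff in E1. apply (rho2_ext _ _ _ _ H) in E1. apply rho_iff in E1. congruence.
  - apply rho_iff in E2. apply (rho2_ext _ _ _ _ H) in E2. apply rho_iff in E2. congruence.
Qed.

Lemma RB b : IM b -> Rmap (V b) = V (rho b).
Proof.
  intro Hb. unfold Rmap. destruct (excluded_middle_informative _) as [H|H].
  - pose proof (V_pos _ Hb). unfold V in *. lra.
  - rewrite (rho_ext (beta (V b)) b); [reflexivity|]. apply beta_spec; auto.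
Qed.

Definition bi (x : bool) : nat := if x then 1%nat else 0%nat.

Lemma ones_S b n : ones b (S n) = (ones b n + bi (b (S n)))%nat.
Proof. reflexivity. Qed.

Lemma ones_mono b n n' : (n <= n')%nat -> (ones b n <= ones b n')%nat.
Proof.
  intro H. induction H; auto. rewrite ones_S. lia.
Qed.

Lemma ones_add_le b n j : (ones b (n + j) <= ones b n + j)%nat.
Proof.
  induction j; [rewrite Nat.add_0_r; lia|].
  rewrite Nat.add_succ_r, ones_S. unfold bi; destruct (b _); lia.
Qed.

Lemma ones_lt b p p' : (ones b p < ones b p')%nat -> (p < p')%nat.
Proof.
  intro H. destruct (Nat.lt_ge_cases p p') as [|H']; auto.
  apply (ones_mono b) in H'. lia.
Qed.

Lemma ones_true b p : (1 <= p)%nat -> b p = true -> ones b p = S (ones b (pred p)).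
Proof.
  intros Hp Hb. destruct p; [lia|]. rewrite ones_S, Hb. simpl. lia.
Qed.

Lemma kth_unique b p p' : (1 <= p)%nat -> (1 <= p')%nat -> b p = true -> b p' = true ->
  ones b p = ones b p' -> p = p'.
Proof.
  intros H1 H2 H3 H4 H5.
  destruct (Nat.lt_trichotomy p p') as [Hl|[Hl|Hl]]; auto.
  - pose proof (ones_true b p' H2 H4). pose proof (ones_mono b p (pred p') ltac:(lia)). lia.
  - pose proof (ones_true b p H1 H3). pose proof (ones_mono b p' (pred p) ltac:(lia)). lia.
Qed.

Lemma ones_unbounded b : IM b -> forall K, exists M, (K <= ones b M)%nat.
Proof.
  intros Hb K. induction K as [|K [M HM]]; [exists 0%nat; lia|].
  destruct (Hb (S M)) as [n [Hn Hbn]]. exists n.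
  pose proof (ones_true b n ltac:(lia) Hbn). pose proof (ones_mono b M (pred n) ltac:(lia)). lia.
Qed.

Lemma kth_exists b k : IM b -> (1 <= k)%nat -> exists p, (1 <= p)%nat /\ b p = true /\ ones b p = k.
Proof.
  intros Hb Hk. destruct (ones_unbounded b Hb k) as [M HM].
  induction M as [|M IH]; [simpl in HM; lia|].
  destruct (Compare_dec.le_lt_dec k (ones b M)) as [H|H]; auto.
  rewrite ones_S in HM. destruct (b (S M)) eqn:E; simpl in HM; [|lia].
  exists (S M). split; [lia|]. split; auto. rewrite ones_S, E. simpl. lia.
Qed.

Lemma rho2_at e b p : (1 <= p)%nat -> b p = true -> (rho2 e b (ones b p) <-> Nat.even p = e).
Proof.
  intros Hp Hb. split.
  - intros [p' [H1 [H2 [H3 H4]]]]. assert (p' = p) by (apply (kth_unique b); auto). subst; auto.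
  - intro. exists p. auto.
Qed.

Lemma rho_at b p : (1 <= p)%nat -> b p = true -> rho b (ones b p) = Nat.even p.
Proof.
  intros Hp Hb. destruct (rho b (ones b p)) eqn:E.
  - apply rho_iff in E. apply (rho2_at true b p Hp Hb) in E. auto.
  - destruct (Nat.even p) eqn:E2; auto. apply (rho2_at true b p Hp Hb) in E2.
    apply rho_iff in E2. congruence.
Qed.

Lemma rho2_false b k : (forall p, (1 <= p)%nat -> b p = true -> ones b p = k -> Nat.even p = false) ->
  rho b k = false.
Proof.
  intro H. destruct (rho b k) eqn:E; auto. apply rho_iff in E. destruct E as [p [H1 [H2 [H3 H4]]]].
  rewrite H in H3; auto.
Qed.
Definition ONE : nat -> bool := fun _ => true.
Definition ZERO : nat -> bool := fun _ => false.
Definition AT : nat -> bool := fun n => Nat.even n.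
Definition AF : nat -> bool := fun n => negb (Nat.even n).

Lemma V_ONE : V ONE = 1.
Proof. pose proof (V_cons ONE) as H. simpl in H. change (shift ONE) with ONE in H. lra. Qed.
Lemma V_ZERO : V ZERO = 0.
Proof. pose proof (V_cons ZERO) as H. simpl in H. change (shift ZERO) with ZERO in H. lra. Qed.

Lemma shift_AT : V (shift AT) = V AF.
Proof. apply V_ext. intros n _. unfold shift, AT, AF. rewrite Nat.even_succ, <- Nat.negb_even. auto. Qed.
Lemma shift_AF : V (shift AF) = V AT.
Proof. apply V_ext. intros n _. unfold shift, AT, AF. rewrite Nat.even_succ, <- Nat.negb_even.
  destruct (Nat.even n); auto. Qed.

Lemma V_AT : V AT = 1/3.
Proof.
  pose proof (V_cons AT) as H1. pose proof (V_cons AF) as H2.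
  rewrite shift_AT in H1. rewrite shift_AF in H2. simpl in H1, H2. lra.
Qed.
Lemma V_AF : V AF = 2/3.
Proof.
  pose proof (V_cons AT) as H1. pose proof (V_cons AF) as H2.
  rewrite shift_AT in H1. rewrite shift_AF in H2. simpl in H1, H2. lra.
Qed.

Lemma ones_ONE k : ones ONE k = k.
Proof. induction k; simpl; auto. rewrite IHk. simpl. lia. Qed.

Lemma ones_AT k : ones AT (2 * k) = k.
Proof.
  induction k; auto. replace (2 * S k)%nat with (S (S (2 * k))) by lia.
  rewrite !ones_S, IHk. unfold AT. rewrite !Nat.even_succ, Nat.odd_succ, Nat.even_mul, Nat.odd_mul.
  simpl. lia.
Qed.
Lemma ones_AF k : ones AF (2 * k) = k.
Proof.
  induction k; auto. replace (2 * S k)%nat with (S (S (2 * k))) by lia.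
  rewrite !ones_S, IHk. unfold AF. rewrite !Nat.even_succ, Nat.odd_succ, Nat.even_mul, Nat.odd_mul.
  simpl. lia.
Qed.

Lemma IM_ONE : IM ONE.
Proof. intro N. exists N. auto. Qed.
Lemma IM_AT : IM AT.
Proof. intro N. exists (2 * N)%nat. split; [lia|]. unfold AT. rewrite Nat.even_mul. auto. Qed.
Lemma IM_AF : IM AF.
Proof. intro N. exists (S (2 * N))%nat. split; [lia|]. unfold AF.
  rewrite Nat.even_succ, Nat.odd_mul. auto. Qed.

Lemma rho_ONE k : (1 <= k)%nat -> rho ONE k = AT k.
Proof. intro Hk. rewrite <- (ones_ONE k) at 1. apply rho_at; auto. Qed.

Lemma rho_AT k : (1 <= k)%nat -> rho AT k = ONE k.
Proof.
  intro Hk. rewrite <- (ones_AT k) at 1. rewrite rho_at; try lia.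
  - rewrite Nat.even_mul; auto.
  - unfold AT. rewrite Nat.even_mul; auto.
Qed.

Lemma rho_AF k : rho AF k = ZERO k.
Proof.
  apply rho2_false. intros p _ H _. unfold AF in H. destruct (Nat.even p); auto; discriminate.
Qed.

Lemma Rmap0 : Rmap 0 = 2/3.
Proof. unfold Rmap. destruct (excluded_middle_informative _); auto. contradiction. Qed.

Lemma Rmap1 : Rmap 1 = 1/3.
Proof. replace (Rmap 1) with (Rmap (V ONE)) by (rewrite V_ONE; auto). rewrite RB by apply IM_ONE. rewrite <- V_AT. apply V_ext. apply rho_ONE. Qed.
Lemma Rmap13 : Rmap (1/3) = 1.
Proof. rewrite <- V_AT, RB by apply IM_AT. rewrite <- V_ONE. apply V_ext. apply rho_AT. Qed.
Lemma Rmap23 : Rmap (2/3) = 0.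
Proof. rewrite <- V_AF, RB by apply IM_AF. rewrite <- V_ZERO. apply V_ext. intros; apply rho_AF. Qed.
Definition isQ (x : R) : Prop := exists r : Q, x = Q2R r.

Lemma isQ_Q r : isQ (Q2R r). Proof. exists r; auto. Qed.
Lemma isQ_plus x y : isQ x -> isQ y -> isQ (x + y).
Proof. intros [r ->] [s ->]. exists (r + s)%Q. rewrite Q2R_plus; auto. Qed.
Lemma isQ_mult x y : isQ x -> isQ y -> isQ (x * y).
Proof. intros [r ->] [s ->]. exists (r * s)%Q. rewrite Q2R_mult; auto. Qed.
Lemma isQ_opp x : isQ x -> isQ (- x).
Proof. intros [r ->]. exists (- r)%Q. rewrite Q2R_opp; auto. Qed.
Lemma isQ_inv x : isQ x -> isQ (/ x).
Proof.
  intros [r ->]. exists (/ r)%Q. rewrite RMicromega.Q2R_inv_ext.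
  destruct (Qeq_bool r 0) eqn:E; auto.
  apply Qeq_bool_eq, Qeq_eqR in E. rewrite E. rewrite RMicromega.Q2R_0. apply Rinv_0.
Qed.
Lemma isQ_0 : isQ 0. Proof. exists 0%Q. rewrite RMicromega.Q2R_0; auto. Qed.
Lemma isQ_1 : isQ 1. Proof. exists 1%Q. rewrite RMicromega.Q2R_1; auto. Qed.
Lemma isQ_2 : isQ 2. Proof. replace 2 with (1 + 1) by lra. apply isQ_plus; apply isQ_1. Qed.
Lemma isQ_div x y : isQ x -> isQ y -> isQ (x / y).
Proof. intros. unfold Rdiv. apply isQ_mult; auto. apply isQ_inv; auto. Qed.
Lemma isQ_pow x n : isQ x -> isQ (x ^ n).
Proof. intro H. induction n; simpl; [apply isQ_1| apply isQ_mult; auto]. Qed.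
Lemma isQ_bit (c : bool) : isQ (if c then / 2 else 0).
Proof. destruct c; [apply isQ_inv, isQ_2| apply isQ_0]. Qed.

Fixpoint Fin (b : nat -> bool) (n : nat) : R :=
  match n with
  | O => 0
  | S n => (if b 1%nat then / 2 else 0) + Fin (shift b) n / 2
  end.

Definition shiftn (n : nat) (b : nat -> bool) : nat -> bool := fun k => b (n + k)%nat.

Lemma V_shiftn n : forall b, V b = Fin b n + V (shiftn n b) / 2 ^ n.
Proof.
  induction n as [|n IH]; intro b.
  - change (V b = 0 + V b / 1). lra.
  - rewrite V_cons, (IH (shift b)). simpl Fin.
    change (shiftn n (shift b)) with (shiftn (S n) b).
    assert (0 < 2 ^ n) by (apply pow_lt; lra). simpl. field. lra.
Qed.

Lemma isQ_Fin n : forall b, isQ (Fin b n).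
Proof.
  induction n as [|n IH]; intro b; simpl; [apply isQ_0|].
  apply isQ_plus; [apply isQ_bit| apply isQ_div; [apply IH| apply isQ_2]].
Qed.

Lemma isQ_EP N : forall b P, (1 <= P)%nat -> (forall n, (N < n)%nat -> b (n + P)%nat = b n) -> isQ (V b).
Proof.
  induction N as [|N IH]; intros b P HP Hper.
  - pose proof (V_shiftn P b) as E.
    assert (E2 : V (shiftn P b) = V b).
    { apply V_ext. intros n Hn. unfold shiftn. rewrite Nat.add_comm. apply Hper. lia. }
    rewrite E2 in E.
    assert (H2 : 2 <= 2 ^ P).
    { destruct P; [lia|]. simpl. pose proof (pow_R1_Rle 2 P ltac:(lra)). lra. }
    assert (E3 : V b = Fin b P * 2 ^ P / (2 ^ P - 1)).
    { assert (E4 : V b * 2 ^ P = Fin b P * 2 ^ P + V b) by (rewrite E at 1; field; lra).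
      apply (Rmult_eq_reg_r (2 ^ P - 1)); [|lra].
      unfold Rdiv. rewrite Rmult_assoc, Rinv_l by lra. lra. }
    rewrite E3. apply isQ_div; [apply isQ_mult|apply isQ_plus; [|apply isQ_opp, isQ_1]];
      try apply isQ_pow, isQ_2. apply isQ_Fin.
  - rewrite V_cons. apply isQ_plus; [apply isQ_bit|]. apply isQ_div; [|apply isQ_2].
    apply (IH (shift b) P HP). intros n Hn. unfold shift.
    replace (S (n + P)) with (S n + P)%nat by lia. apply Hper. lia.
Qed.
Lemma pigeon q : forall f : nat -> nat, (forall i, (i <= q)%nat -> (1 <= f i <= q)%nat) ->
  exists i j, (i < j <= q)%nat /\ f i = f j.
Proof.
  induction q as [|q IH]; intros f Hf.
  - specialize (Hf 0%nat ltac:(lia)). lia.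
  - destruct (classic (exists i, (i <= q)%nat /\ f i = f (S q))) as [[i [Hi E]]|HA].
    { exists i, (S q). split; [lia|auto]. }
    destruct (classic (exists i0, (i0 <= q)%nat /\ f i0 = S q)) as [[i0 [Hi0 E0]]|HB].
    + assert (Hfq : f (S q) <> S q).
      { intro E. apply HA. exists i0. split; auto. congruence. }
      pose proof (Hf (S q) ltac:(lia)) as HSq.
      set (g := fun i => if Nat.eqb (f i) (S q) then f (S q) else f i).
      destruct (IH g) as [i [j [Hij Eg]]].
      { intros i Hi. unfold g. destruct (Nat.eqb_spec (f i) (S q)); [lia|].
        pose proof (Hf i ltac:(lia)). lia. }
      unfold g in Eg.
      destruct (Nat.eqb_spec (f i) (S q)), (Nat.eqb_spec (f j) (S q)).
      * exists i, j. split; [lia|congruence].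
      * exfalso. apply HA. exists j. split; [lia|congruence].
      * exfalso. apply HA. exists i. split; [lia|congruence].
      * exists i, j. split; [lia|congruence].
    + destruct (IH f) as [i [j [Hij E]]].
      { intros i Hi. pose proof (Hf i ltac:(lia)).
        assert (f i <> S q) by (intro; apply HB; exists i; auto). lia. }
      exists i, j. split; [lia|auto].
Qed.

Definition fstep (q p : nat) : nat := if Nat.ltb q (2 * p) then (2 * p - q)%nat else (2 * p)%nat.
Definition st (q p n : nat) : nat := Nat.iter n (fstep q) p.
Definition dig (q p : nat) (n : nat) : bool :=
  match n with O => false | S n' => Nat.ltb q (2 * st q p n') end.

Lemma fstep_range q p : (0 < p <= q)%nat -> (0 < fstep q p <= q)%nat.
Proof. intro H. unfold fstep. destruct (Nat.ltb_spec q (2 * p)); lia. Qed.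

Lemma st_range q p n : (0 < p <= q)%nat -> (0 < st q p n <= q)%nat.
Proof. intro H. induction n; simpl; auto. apply fstep_range. exact IHn. Qed.

Lemma st_S q p n : st q p (S n) = st q (fstep q p) n.
Proof. unfold st. rewrite Nat.iter_succ_r. reflexivity. Qed.

Lemma dig_shift q p n : (1 <= n)%nat -> shift (dig q p) n = dig q (fstep q p) n.
Proof.
  intro Hn. destruct n as [|n]; [lia|]. unfold shift.
  change (Nat.ltb q (2 * st q p (S n)) = Nat.ltb q (2 * st q (fstep q p) n)). rewrite st_S. reflexivity.
Qed.

Lemma dig_val_step q p : (0 < p <= q)%nat ->
  V (dig q p) - INR p / INR q = (V (dig q (fstep q p)) - INR (fstep q p) / INR q) / 2.
Proof.
  intro H. rewrite V_cons.
  rewrite (V_ext (shift (dig q p)) (dig q (fstep q p))) by apply dig_shift.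
  assert (Hq : 0 < INR q) by (apply lt_0_INR; lia).
  unfold fstep. change (dig q p 1) with (Nat.ltb q (2 * st q p 0)). change (st q p 0) with p.
  destruct (Nat.ltb q (2*p)) eqn:E.
  - apply Nat.ltb_lt in E. rewrite minus_INR by lia. rewrite mult_INR. change (INR 2) with 2. field. lra.
  - apply Nat.ltb_ge in E. rewrite mult_INR. change (INR 2) with 2. field. lra.
Qed.

Lemma dig_val q p : (0 < p <= q)%nat -> V (dig q p) = INR p / INR q.
Proof.
  intro H.
  assert (Hb : forall n p, (0 < p <= q)%nat -> Rabs (V (dig q p) - INR p / INR q) <= (/2) ^ n).
  { induction n as [|n IH]; intros p' Hp'.
    - assert (Hq : 0 < INR q) by (apply lt_0_INR; lia).
      assert (0 <= INR p' / INR q <= 1).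
      { split. apply Rmult_le_pos; [apply pos_INR| left; apply Rinv_0_lt_compat; lra].
        apply Rmult_le_reg_r with (INR q); [lra|]. unfold Rdiv. rewrite Rmult_assoc, Rinv_l by lra.
        rewrite Rmult_1_r, Rmult_1_l. apply le_INR. lia. }
      pose proof (V_nonneg (dig q p')). pose proof (V_le1 (dig q p')).
      simpl. apply Rabs_le. lra.
    - rewrite dig_val_step by auto. unfold Rdiv. rewrite Rabs_mult.
      rewrite (Rabs_pos_eq (/2)) by lra. simpl.
      pose proof (IH (fstep q p') (fstep_range q p' Hp')). lra. }
  destruct (Req_dec (V (dig q p) - INR p / INR q) 0) as [E|E]; [lra|].
  exfalso. assert (Hpos : 0 < Rabs (V (dig q p) - INR p / INR q)) by (apply Rabs_pos_lt; auto).
  destruct (pow_lt_1_zero (/2) ltac:(rewrite Rabs_pos_eq; lra) _ Hpos) as [N HN].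
  specialize (HN N ltac:(lia)). specialize (Hb N p H).
  rewrite Rabs_pos_eq in HN by (apply pow_le; lra). lra.
Qed.

Lemma dig_IM q p : (0 < p <= q)%nat -> IM (dig q p).
Proof.
  intros H N. apply NNPP. intro Hn.
  assert (Hz : forall n, (N <= n)%nat -> dig q p n = false).
  { intros n Hn'. destruct (dig q p n) eqn:E; auto. exfalso. apply Hn. exists n; auto. }
  assert (Hg : forall k, st q p (N + k) = (2 ^ k * st q p N)%nat).
  { induction k. rewrite Nat.add_0_r. simpl. lia.
    rewrite Nat.add_succ_r. unfold st at 1. simpl Nat.iter. fold (st q p (N + k)).
    specialize (Hz (S (N + k)) ltac:(lia)). change (Nat.ltb q (2 * st q p (N+k)) = false) in Hz. unfold fstep. rewrite Hz.
    rewrite IHk. simpl. lia. }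
  pose proof (st_range q p (N + q) H). rewrite Hg in H0.
  pose proof (st_range q p N H). pose proof (Nat.pow_gt_lin_r 2 q ltac:(lia)). nia.
Qed.

Lemma dig_EP q p : (0 < p <= q)%nat -> exists N P, (1 <= P)%nat /\
  forall n, (N < n)%nat -> dig q p (n + P) = dig q p n.
Proof.
  intro H. destruct (pigeon q (st q p)) as [i [j [Hij E]]].
  { intros i Hi. pose proof (st_range q p i H). lia. }
  exists i, (j - i)%nat. split; [lia|]. intros n Hn.
  destruct n as [|n]; [lia|].
  replace (S n + (j - i))%nat with (S (n + (j - i))) by lia.
  change (Nat.ltb q (2 * st q p (n + (j-i))) = Nat.ltb q (2 * st q p n)).
  assert (Est : st q p (n + (j - i)) = st q p n).
  { unfold st. replace (n + (j - i))%nat with ((n - i) + j)%nat by lia.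
    rewrite Nat.iter_add. change (Nat.iter j (fstep q) p) with (st q p j). rewrite <- E.
    unfold st. rewrite <- Nat.iter_add. f_equal. lia. }
  rewrite Est. reflexivity.
Qed.

Lemma rat_word x : Qset x -> 0 < x -> exists b N P, IM b /\ V b = x /\ (1 <= P)%nat /\
  forall n, (N < n)%nat -> b (n + P)%nat = b n.
Proof.
  intros [[r Hr] [H0 H1]] Hx.
  set (z := Qnum r) in *. set (d := Qden r) in *.
  assert (Hd : 0 < IZR (Z.pos d)) by (apply IZR_lt; lia).
  unfold Q2R in Hr. fold z in Hr. fold d in Hr.
  assert (Hz : (0 < z)%Z).
  { apply lt_IZR. rewrite Hr in Hx. apply Rmult_lt_reg_r with (/ IZR (Z.pos d)).
    apply Rinv_0_lt_compat; lra. lra. }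
  assert (Hzd : (z <= Z.pos d)%Z).
  { apply le_IZR. rewrite Hr in H1. apply Rmult_le_reg_r with (/ IZR (Z.pos d)).
    apply Rinv_0_lt_compat; lra. rewrite Rinv_r; lra. }
  set (p := Z.to_nat z). set (q := Pos.to_nat d).
  assert (Hpq : (0 < p <= q)%nat) by (unfold p, q; lia).
  destruct (dig_EP q p Hpq) as [N [P [HP Hper]]].
  exists (dig q p), N, P. split; [apply dig_IM; auto|]. split; [|auto].
  rewrite dig_val by auto. rewrite Hr. unfold p, q.
  rewrite INR_IZR_INZ, Znat.Z2Nat.id by lia. rewrite INR_IZR_INZ, Znat.positive_nat_Z. reflexivity.
Qed.
Definition EPm (b : nat -> bool) (N P m : nat) : Prop :=
  (1 <= P)%nat /\ (forall n, (N < n)%nat -> b (n + P)%nat = b n) /\ ones b (N + P) = (ones b N + m)%nat.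

Lemma ones_per b N P m : EPm b N P m -> forall d, ones b (N + d + P) = (ones b (N + d) + m)%nat.
Proof.
  intros [HP [Hper Hm]] d. induction d as [|d IH].
  - rewrite Nat.add_0_r. exact Hm.
  - replace (N + S d + P)%nat with (S (N + d + P)) by lia.
    replace (N + S d)%nat with (S (N + d)) by lia.
    rewrite !ones_S, IH. replace (S (N + d + P)) with (S (N + d) + P)%nat by lia.
    rewrite Hper by lia. lia.
Qed.

Lemma ones_per_mul b N P m : EPm b N P m -> forall j, ones b (N + j * P) = (ones b N + j * m)%nat.
Proof.
  intros H j. induction j as [|j IH]; [simpl; rewrite Nat.add_0_r; lia|].
  replace (N + S j * P)%nat with (N + j * P + P)%nat by lia.
  rewrite (ones_per b N P m H (j * P)), IH. lia.
Qed.

Lemma EP_m_pos b N P m : IM b -> EPm b N P m -> (1 <= m)%nat.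
Proof.
  intros Hb H. destruct m as [|m]; [|lia]. exfalso.
  destruct (ones_unbounded b Hb (S (ones b N))) as [M HM].
  pose proof (ones_per_mul b N P 0 H M). destruct H as [HP _].
  pose proof (ones_mono b M (N + M * P) ltac:(nia)). lia.
Qed.

Lemma even_add_eqb a c : Nat.even (a + c) = Bool.eqb (Nat.even a) (Nat.even c).
Proof. apply Nat.even_add. Qed.

Lemma rho2_shift b N P m e k : EPm b N P m -> (ones b N < k)%nat ->
  (rho2 e b k <-> rho2 (if Nat.even P then e else negb e) b (k + m)).
Proof.
  intros H Hk. pose proof (ones_per b N P m H) as Hop. destruct H as [HP [Hper Hm]]. split.
  - intros [p [H1 [H2 [H3 H4]]]].
    assert (Hp : (N < p)%nat) by (apply (ones_lt b); lia).
    exists (p + P)%nat. split; [lia|]. rewrite Hper by lia. split; auto. split.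
    + rewrite even_add_eqb, H3. destruct e, (Nat.even P); auto.
    + replace p with (N + (p - N))%nat by lia. rewrite Hop. replace (N + (p - N))%nat with p by lia. lia.
  - intros [p' [H1 [H2 [H3 H4]]]].
    assert (Hp : (N + P < p')%nat) by (apply (ones_lt b); lia).
    exists (p' - P)%nat. split; [lia|].
    assert (Hb : b (p' - P)%nat = true) by (rewrite <- Hper by lia; replace (p' - P + P)%nat with p' by lia; auto).
    split; auto. split.
    + replace p' with (p' - P + P)%nat in H3 by lia. rewrite even_add_eqb in H3.
      destruct e, (Nat.even P), (Nat.even (p' - P)); simpl in *; auto; discriminate.
    + pose proof (Hop (p' - P - N)%nat). replace (N + (p' - P - N))%nat with (p' - P)%nat in H by lia.
      replace (p' - P + P)%nat with p' in H by lia. lia.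
Qed.

Lemma rho_false_iff b k : IM b -> (1 <= k)%nat -> (rho2 false b k <-> rho b k = false).
Proof.
  intros Hb Hk. destruct (kth_exists b k Hb Hk) as [p [H1 [H2 H3]]]. subst k.
  rewrite rho2_at by auto. rewrite rho_at by auto. destruct (Nat.even p); split; auto.
Qed.

Lemma EP_rho_even b N P m k : EPm b N P m -> Nat.even P = true -> (ones b N < k)%nat ->
  rho b (k + m) = rho b k.
Proof.
  intros H HP Hk. pose proof (rho2_shift b N P m true k H Hk) as E. rewrite HP in E.
  destruct (rho b k) eqn:E1, (rho b (k + m)) eqn:E2; auto.
  - apply rho_iff in E1. apply E in E1. apply rho_iff in E1. congruence.
  - apply rho_iff in E2. apply E in E2. apply rho_iff in E2. congruence.
Qed.

Lemma EP_rho_odd b N P m k : IM b -> EPm b N P m -> Nat.even P = false -> (ones b N < k)%nat ->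
  rho b (k + m) = negb (rho b k).
Proof.
  intros Hb H HP Hk. pose proof (rho2_shift b N P m false k H Hk) as E. rewrite HP in E.
  simpl in E. rewrite (rho_false_iff b k Hb ltac:(lia)) in E.
  destruct (rho b k) eqn:E1, (rho b (k + m)) eqn:E2; auto.
  - apply rho_iff in E2. apply E in E2. congruence.
  - exfalso. assert (rho b (k + m) = true) by (apply rho_iff, E; auto). congruence.
Qed.

Lemma window_ones c A j : ones c (A + j) = (ones c A + j)%nat -> forall i, (A < i <= A + j)%nat -> c i = true.
Proof.
  revert A. induction j as [|j IH]; intros A H i Hi; [lia|].
  rewrite Nat.add_succ_r, ones_S in H.
  pose proof (ones_add_le c A j).
  destruct (c (S (A + j))) eqn:E; simpl in H; [|lia].
  destruct (Nat.eq_dec i (S (A + j))); [subst; auto|].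
  apply (IH A); lia.
Qed.

Lemma periodic_all c K P : (1 <= P)%nat -> (forall k, (K < k)%nat -> c (k + P)%nat = c k) ->
  (forall i, (K < i <= K + P)%nat -> c i = true) -> forall i, (K < i)%nat -> c i = true.
Proof.
  intros HP Hper Hw i. induction i as [i IH] using (well_founded_induction Wf_nat.lt_wf). intro Hi.
  destruct (Nat.le_gt_cases i (K + P)) as [Hle|Hgt]; [apply Hw; lia|].
  replace i with ((i - P) + P)%nat by lia. rewrite Hper by lia. apply IH; lia.
Qed.

Lemma compl_window c A m : (forall k, (A < k)%nat -> c (k + m)%nat = negb (c k)) ->
  ones c (A + 2 * m) = (ones c A + m)%nat.
Proof.
  intro H.
  assert (G : forall j, (ones c (A + m + j) + ones c (A + j) = ones c (A + m) + ones c A + j)%nat).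
  { induction j as [|j IH]; [rewrite !Nat.add_0_r; lia|].
    rewrite !Nat.add_succ_r, !ones_S.
    replace (S (A + m + j)) with (S (A + j) + m)%nat by lia. rewrite H by lia.
    destruct (c (S (A + j))); simpl; lia. }
  specialize (G m). replace (A + 2 * m)%nat with (A + m + m)%nat by lia. lia.
Qed.

Definition reach (x : R) : Prop := exists k, Nat.iter k Rmap x = 0 \/ Nat.iter k Rmap x = 1.

Lemma reach_step x : reach (Rmap x) -> reach x.
Proof. intros [k Hk]. exists (S k). rewrite Nat.iter_succ_r. auto. Qed.

Definition wcons (a : bool) (s : nat -> bool) : nat -> bool :=
  fun n => match n with O => false | S O => a | S m => s m end.

Lemma V_wcons a s : V (wcons a s) = (if a then / 2 else 0) + V s / 2.
Proof.
  rewrite V_cons. rewrite (V_ext (shift (wcons a s)) s). reflexivity.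
  intros n Hn. unfold shift, wcons. destruct n; [lia|]. reflexivity.
Qed.

Lemma IM_wcons a s : IM s -> IM (wcons a s).
Proof.
  intros H N. destruct (H (S N)) as [n [Hn Hs]]. exists (S n). split; [lia|].
  unfold wcons. destruct n; [lia|]. auto.
Qed.

Lemma notIM_fin c : ~ IM c -> exists J, forall j, (J < j)%nat -> c j = false.
Proof.
  intro H. apply NNPP. intro H2. apply H. intro N. apply NNPP. intro H3. apply H2.
  exists N. intros j Hj. destruct (c j) eqn:E; auto. exfalso. apply H3. exists j. split; [lia|auto].
Qed.

Lemma FIN J : forall c, (forall j, (J < j)%nat -> c j = false) ->
  V c = 0 \/ exists L c', (L <= J)%nat /\ IM c' /\ V c' = V c /\ forall k, (L < k)%nat -> c' k = true.
Proof.
  induction J as [|J IH]; intros c Hc.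
  - left. rewrite <- V_ZERO. apply V_ext. intros n Hn. apply Hc. lia.
  - destruct (IH (shift c)) as [H0|[L [c' [HL [Hc' [HV Hk]]]]]].
    { intros j Hj. unfold shift. apply Hc. lia. }
    + pose proof (V_cons c) as Ec. rewrite H0 in Ec. destruct (c 1%nat) eqn:E.
      * right. exists 1%nat, (wcons false ONE). split; [lia|]. split; [apply IM_wcons, IM_ONE|].
        split. rewrite V_wcons, V_ONE, Ec. lra.
        intros k Hk'. unfold wcons. destruct k as [|[|k]]; try lia. reflexivity.
      * left. lra.
    + right. exists (S L), (wcons (c 1%nat) c'). split; [lia|]. split; [apply IM_wcons; auto|].
      split. rewrite V_wcons, HV, (V_cons c). reflexivity.
      intros k Hk'. unfold wcons. destruct k as [|[|k]]; try lia. apply Hk. lia.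
Qed.

Lemma ones_all b N : (forall k, (N < k)%nat -> b k = true) -> forall j, ones b (N + j) = (ones b N + j)%nat.
Proof.
  intros H j. induction j; [rewrite Nat.add_0_r; lia|]. rewrite Nat.add_succ_r, ones_S, IHj, H by lia.
  simpl. lia.
Qed.

Lemma dyadic N : forall x b, IM b -> V b = x -> (forall k, (N < k)%nat -> b k = true) -> reach x.
Proof.
  induction N as [N IH] using (well_founded_induction Wf_nat.lt_wf). intros x b Hb Hx Hk.
  destruct N as [|N'].
  - exists 0%nat. right. simpl. rewrite <- Hx. rewrite <- V_ONE. apply (V_ext b ONE). intros n Hn. apply Hk. lia.
  - set (N := S N') in *. set (K0 := ones b N).
    set (c := rho b).
    assert (Hc : forall k, (K0 < k)%nat -> c k = Nat.even (N + (k - K0))).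
    { intros k Hk'. unfold c.
      replace k with (ones b (N + (k - K0))) at 1 by (rewrite ones_all by auto; unfold K0; lia).
      apply rho_at; [lia| apply Hk; lia]. }
    assert (HcIM : IM c).
    { intro M. destruct (Nat.even (N + (M + S K0 - K0))) eqn:E.
      - exists (M + S K0)%nat. split; [lia|]. rewrite Hc by lia. auto.
      - exists (S (M + S K0))%nat. split; [lia|]. rewrite Hc by lia.
        replace (N + (S (M + S K0) - K0))%nat with (S (N + (M + S K0 - K0))) by lia.
        rewrite Nat.even_succ, <- Nat.negb_even, E. auto. }
    apply reach_step. rewrite <- Hx, RB by auto. fold c.
    set (J0 := ones c K0). set (d := rho c). set (e := Nat.even (N + K0)).
    assert (Hd : forall j, (J0 < j)%nat -> d j = e).
    { intros j Hj. destruct (kth_exists c j HcIM ltac:(lia)) as [p [H1 [H2 H3]]].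
      unfold d. rewrite <- H3, rho_at by auto.
      assert (Hp : (K0 < p)%nat) by (apply (ones_lt c); lia).
      rewrite Hc in H2 by auto. unfold e.
      replace p with ((p - K0) + K0)%nat by lia. rewrite even_add_eqb.
      rewrite even_add_eqb in H2 |- *.
      destruct (Nat.even N), (Nat.even K0), (Nat.even (p - K0)); simpl in *; auto. }
    assert (HJ0 : (J0 < N)%nat).
    { assert (A1 : (J0 <= K0)%nat) by (unfold J0; pose proof (ones_add_le c 0 K0); simpl in *; lia).
      assert (A2 : (K0 <= N)%nat) by (unfold K0; pose proof (ones_add_le b 0 N); simpl in *; lia).
      destruct (Nat.eq_dec J0 N) as [E|E]; [|lia]. exfalso.
      assert (W1 : ones b (0 + N) = (ones b 0 + N)%nat) by (rewrite Nat.add_0_l; change (ones b 0) with 0%nat; fold K0; lia).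
      assert (W2 : ones c (0 + K0) = (ones c 0 + K0)%nat) by (rewrite Nat.add_0_l; change (ones c 0) with 0%nat; fold J0; lia).
      assert (Hb1 : b 1%nat = true) by (apply (window_ones b 0 N W1); unfold N; lia).
      assert (Hc1 : c 1%nat = true) by (apply (window_ones c 0 K0 W2); lia).
      assert (c 1%nat = false).
      { unfold c. replace 1%nat with (ones b 1) at 1 by (simpl; rewrite Hb1; auto).
        rewrite rho_at by auto. reflexivity. }
      congruence. }
    destruct e eqn:Ee.
    + assert (HdIM : IM d).
      { intro M. exists (M + S J0)%nat. split; [lia|]. apply Hd. lia. }
      apply reach_step. rewrite RB by auto. fold d. apply (IH J0 HJ0 (V d) d HdIM eq_refl).
      intros; apply Hd; auto.
    + apply reach_step. rewrite RB by auto. fold d.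
      destruct (FIN J0 d Hd) as [H0|[L [d' [HL [Hd' [HV Hk']]]]]].
      * exists 0%nat. left. simpl. auto.
      * rewrite <- HV. apply (IH L ltac:(lia) (V d') d' Hd' eq_refl Hk').
Qed.
Lemma even_step m (IH : forall m', (m' < m)%nat -> forall b N P, IM b -> EPm b N P m' -> reach (V b)) :
  forall b N P, IM b -> EPm b N P m -> Nat.even P = true -> reach (V b).
Proof.
  intros b N P Hb H HP.
  pose proof (EP_m_pos b N P m Hb H) as Hm.
  set (K0 := ones b N). set (c := rho b).
  assert (Hper : forall k, (K0 < k)%nat -> c (k + m)%nat = c k) by (intros; apply (EP_rho_even b N P m); auto).
  apply reach_step. rewrite RB by auto. fold c.
  destruct (classic (IM c)) as [Hc|Hc].
  - set (mc := (ones c (K0 + m) - ones c K0)%nat).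
    assert (Hmc : ones c (K0 + m) = (ones c K0 + mc)%nat).
    { unfold mc. pose proof (ones_mono c K0 (K0 + m) ltac:(lia)). lia. }
    assert (HmcE : EPm c K0 m mc) by (split; [lia| split; auto]).
    assert (Hle : (mc <= m)%nat) by (pose proof (ones_add_le c K0 m); lia).
    destruct (Nat.eq_dec mc m) as [E|E].
    + rewrite E in Hmc.
      apply (dyadic K0 (V c) c Hc eq_refl).
      apply (periodic_all c K0 m); auto. apply window_ones. auto.
    + apply (IH mc ltac:(lia) c K0 m Hc HmcE).
  - destruct (notIM_fin c Hc) as [J HJ].
    destruct (FIN J c HJ) as [H0|[L [c' [HL [Hc' [HV Hk]]]]]].
    + exists 0%nat. left. simpl. auto.
    + rewrite <- HV. apply (dyadic L (V c') c' Hc' eq_refl Hk).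
Qed.

Lemma good m : forall b N P, IM b -> EPm b N P m -> reach (V b).
Proof.
  induction m as [m IH] using (well_founded_induction Wf_nat.lt_wf).
  intros b N P Hb H.
  destruct (Nat.even P) eqn:HP; [apply (even_step m IH b N P); auto|].
  pose proof (EP_m_pos b N P m Hb H) as Hm.
  set (K0 := ones b N). set (c := rho b).
  assert (Hneg : forall k, (K0 < k)%nat -> c (k + m)%nat = negb (c k)) by (intros; apply (EP_rho_odd b N P m); auto).
  assert (Hc : IM c).
  { intro M. destruct (c (M + S K0)%nat) eqn:E.
    - exists (M + S K0)%nat. split; [lia|auto].
    - exists (M + S K0 + m)%nat. split; [lia|]. rewrite Hneg by lia. rewrite E. auto. }
  assert (HE : EPm c K0 (2 * m) m).
  { split; [lia|]. split.
    - intros n Hn. replace (n + 2 * m)%nat with (n + m + m)%nat by lia.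
      rewrite !Hneg by lia. destruct (c n); auto.
    - apply compl_window. auto. }
  apply reach_step. rewrite RB by auto. fold c.
  apply (even_step m IH c K0 (2 * m) Hc HE). rewrite Nat.even_mul. auto.
Qed.

Lemma rat_reach x : Qset x -> reach x.
Proof.
  intro Hq. destruct (Req_dec x 0) as [E|E].
  - exists 0%nat. left. simpl. auto.
  - assert (Hx : 0 < x) by (destruct Hq as [_ [H1 _]]; lra).
    destruct (rat_word x Hq Hx) as [b [N [P [Hb [HV [HP Hper]]]]]].
    set (m := (ones b (N + P) - ones b N)%nat).
    assert (HE : EPm b N P m).
    { split; auto. split; auto. unfold m. pose proof (ones_mono b N (N + P) ltac:(lia)). lia. }
    rewrite <- HV. apply (good m b N P Hb HE).
Qed.

Lemma Qset_V b : isQ (V b) -> Qset (V b).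
Proof. intros [r Hr]. split; [exists r; auto|]. split; [apply V_nonneg| apply V_le1]. Qed.

Lemma invariance x : Qset x -> Qset (Rmap x).
Proof.
  intro Hq. destruct (Req_dec x 0) as [E|E].
  - subst. rewrite Rmap0. split; [|lra]. exists (2 # 3)%Q. unfold Q2R. simpl. lra.
  - assert (Hx : 0 < x) by (destruct Hq as [_ [H1 _]]; lra).
    destruct (rat_word x Hq Hx) as [b [N [P [Hb [HV [HP Hper]]]]]].
    set (m := (ones b (N + P) - ones b N)%nat).
    assert (HE : EPm b N P m).
    { split; auto. split; auto. unfold m. pose proof (ones_mono b N (N + P) ltac:(lia)). lia. }
    pose proof (EP_m_pos b N P m Hb HE).
    rewrite <- HV, RB by auto. apply Qset_V.
    apply (isQ_EP (ones b N) (rho b) (2 * m)); [lia|].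
    intros n Hn. replace (n + 2 * m)%nat with (n + m + m)%nat by lia.
    destruct (Nat.even P) eqn:HP'.
    + rewrite !(EP_rho_even b N P m) by (auto; lia). auto.
    + rewrite !(EP_rho_odd b N P m) by (auto; lia). destruct (rho b n); auto.
Qed.
Import List. Import ListNotations.

Fixpoint appw (l : list bool) (t : nat -> bool) : nat -> bool :=
  match l with [] => t | a :: l' => wcons a (appw l' t) end.

Lemma appw_app l1 l2 t : appw (l1 ++ l2) t = appw l1 (appw l2 t).
Proof. induction l1; simpl; auto. rewrite IHl1. auto. Qed.

Lemma appw_nth l t k : (1 <= k)%nat ->
  appw l t k = if Nat.leb k (length l) then nth (k - 1) l false else t (k - length l)%nat.
Proof.
  revert k. induction l as [|a l IH]; intros k Hk.
  - simpl. rewrite Nat.sub_0_r. destruct k; [lia|]. auto.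
  - simpl appw. unfold wcons. destruct k as [|[|k]]; [lia| reflexivity|].
    rewrite IH by lia. simpl length.
    replace (S (S k) - 1)%nat with (S k) by lia. replace (S k - 1)%nat with k by lia.
    destruct (Nat.leb_spec (S k) (length l)), (Nat.leb_spec (S (S k)) (S (length l))); try lia; auto.
Qed.

Lemma IM_appw l t : IM t -> IM (appw l t).
Proof. intro H. induction l; simpl; auto. apply IM_wcons. auto. Qed.

Lemma V_appw_bound l t : (forall n, (length l < n)%nat -> appw l t n = t (n - length l)%nat).
Proof. intros n Hn. rewrite appw_nth by lia. destruct (Nat.leb_spec n (length l)); [lia|auto]. Qed.

Lemma ones_wcons a s n : ones (wcons a s) (S n) = (bi a + ones s n)%nat.
Proof.
  induction n; [destruct a; simpl; lia|]. rewrite ones_S, IHn, ones_S.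
  change (wcons a s (S (S n))) with (s (S n)). lia.
Qed.

Lemma rho2_wcons_false e s k : rho2 e (wcons false s) k <-> rho2 (negb e) s k.
Proof.
  split.
  - intros [p [H1 [H2 [H3 H4]]]]. destruct p as [|[|p]]; try lia; [discriminate|].
    exists (S p). split; [lia|]. split; [exact H2|]. split.
    + rewrite Nat.even_succ, <- Nat.negb_even in H3. rewrite <- H3. destruct (Nat.even (S p)); auto.
    + rewrite ones_wcons in H4. simpl in H4. exact H4.
  - intros [p [H1 [H2 [H3 H4]]]]. exists (S p). split; [lia|]. split.
    + unfold wcons. destruct p; [lia|]. exact H2.
    + split. rewrite Nat.even_succ, <- Nat.negb_even, H3. destruct e; auto.
      rewrite ones_wcons. simpl. exact H4.
Qed.

Lemma rho2_wcons_true e s k : rho2 e (wcons true s) k <->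
  ((k = 1%nat /\ e = false) \/ ((2 <= k)%nat /\ rho2 (negb e) s (k - 1))).
Proof.
  split.
  - intros [p [H1 [H2 [H3 H4]]]]. destruct p as [|[|p]]; try lia.
    + left. simpl in H4. simpl in H3. auto.
    + right. rewrite ones_wcons in H4. change (bi true) with 1%nat in H4.
      pose proof (ones_true s (S p) ltac:(lia) H2). split; [lia|].
      exists (S p). split; [lia|]. split; [exact H2|]. split; [|lia].
      rewrite Nat.even_succ, <- Nat.negb_even in H3. rewrite <- H3. destruct (Nat.even (S p)); auto.
  - intros [[-> ->]|[Hk [p [H1 [H2 [H3 H4]]]]]].
    + exists 1%nat. simpl. auto.
    + exists (S p). split; [lia|]. split.
      * unfold wcons. destruct p; [lia|]. exact H2.
      * split. rewrite Nat.even_succ, <- Nat.negb_even, H3. destruct e; auto.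
        rewrite ones_wcons. simpl. lia.
Qed.

Fixpoint rhoL (e : bool) (l : list bool) : list bool :=
  match l with
  | [] => []
  | true :: l' => negb e :: rhoL (negb e) l'
  | false :: l' => rhoL (negb e) l'
  end.

Definition flip (n : nat) (e : bool) : bool := if Nat.even n then e else negb e.

Lemma flip_S n e : flip (S n) e = flip n (negb e).
Proof. unfold flip. rewrite Nat.even_succ, <- Nat.negb_even. destruct (Nat.even n), e; auto. Qed.

Definition appP (l : list bool) (P : nat -> Prop) (k : nat) : Prop :=
  if Nat.leb k (length l) then nth (k - 1) l false = true else P (k - length l)%nat.

Lemma rho2_appw u : forall e t k, (1 <= k)%nat ->
  (rho2 e (appw u t) k <-> appP (rhoL e u) (rho2 (flip (length u) e) t) k).
Proof.
  induction u as [|a u IH]; intros e t k Hk.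
  - unfold appP. simpl. destruct k; [lia|]. simpl. unfold flip. simpl. tauto.
  - simpl appw. simpl length. rewrite flip_S. destruct a.
    + rewrite rho2_wcons_true. simpl rhoL. unfold appP. simpl length.
      destruct k as [|[|k]]; [lia| |].
      * simpl. destruct e; simpl; split; intros; try tauto; try discriminate; try lia.
      * rewrite (IH (negb e) t (S (S k) - 1)%nat ltac:(lia)). unfold appP.
        replace (S (S k) - 1)%nat with (S k) by lia.
        destruct (Nat.leb_spec (S k) (length (rhoL (negb e) u))),
                 (Nat.leb_spec (S (S k)) (S (length (rhoL (negb e) u)))); try lia.
        -- simpl. replace (k - 0)%nat with k by lia. split; [intros [[G _]|[_ G]]; [lia|auto]|intro; right; split; [lia|auto]].
        -- simpl. split; [intros [[G _]|[_ G]]; [lia|auto]|intro; right; split; [lia|auto]].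
    + rewrite rho2_wcons_false. simpl rhoL. rewrite IH by auto. reflexivity.
Qed.

Definition AA (e : bool) : nat -> bool := fun j => Bool.eqb (Nat.even j) e.

Lemma IM_AA e : IM (AA e).
Proof.
  intro N. destruct (Bool.eqb (Nat.even N) e) eqn:E.
  - exists N. split; auto.
  - exists (S N). split; [lia|]. unfold AA. rewrite Nat.even_succ, <- Nat.negb_even.
    destruct (Nat.even N), e; simpl in *; auto.
Qed.

Lemma rho2_ONE e j : (1 <= j)%nat -> (rho2 e ONE j <-> AA e j = true).
Proof.
  intro Hj. rewrite <- (ones_ONE j) at 1. rewrite rho2_at by auto. unfold AA.
  destruct (Nat.even j), e; simpl; split; intro; auto; discriminate.
Qed.

Lemma rho2_AA e e' j : (1 <= j)%nat -> (rho2 e' (AA e) j <-> e = e').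
Proof.
  intro Hj. destruct (kth_exists (AA e) j (IM_AA e) Hj) as [p [H1 [H2 H3]]].
  rewrite <- H3, rho2_at by auto. unfold AA in H2.
  destruct (Nat.even p), e, e'; simpl in *; split; intro; auto; discriminate.
Qed.

Lemma rho_appw_ext u t (w : nat -> bool) :
  (forall j, (1 <= j)%nat -> (rho2 (flip (length u) true) t j <-> w j = true)) ->
  forall k, (1 <= k)%nat -> rho (appw u t) k = appw (rhoL true u) w k.
Proof.
  intros Hw k Hk. pose proof (rho2_appw u true t k Hk) as E.
  rewrite appw_nth by auto. unfold appP in E.
  destruct (Nat.leb_spec k (length (rhoL true u))).
  - destruct (rho (appw u t) k) eqn:E1, (nth (k - 1) (rhoL true u) false) eqn:E2; auto.
    + apply rho_iff, E in E1. congruence.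
    + exfalso. assert (rho (appw u t) k = true) by (apply rho_iff, E; auto). congruence.
  - rewrite Hw in E by lia.
    destruct (rho (appw u t) k) eqn:E1, (w (k - length (rhoL true u))%nat) eqn:E2; auto.
    + apply rho_iff, E in E1. congruence.
    + exfalso. assert (rho (appw u t) k = true) by (apply rho_iff, E; auto). congruence.
Qed.

Fixpoint onesL (l : list bool) : nat :=
  match l with [] => O | a :: l' => (bi a + onesL l')%nat end.

Lemma length_rhoL l : forall e, length (rhoL e l) = onesL l.
Proof. induction l as [|a l IH]; intro e; simpl; auto. destruct a; simpl; rewrite IH; auto. Qed.

Lemma R2_dyadic u : Nat.even (onesL u) = Nat.even (length u) ->
  Rmap (Rmap (V (appw u ONE))) = V (appw (rhoL true (rhoL true u)) ONE).
Proof.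
  intro Hpar.
  set (e1 := flip (length u) true).
  rewrite RB by (apply IM_appw, IM_ONE).
  rewrite (V_ext (rho (appw u ONE)) (appw (rhoL true u) (AA e1))).
  2: { apply rho_appw_ext. intros j Hj. apply rho2_ONE; auto. }
  rewrite RB by (apply IM_appw, IM_AA).
  apply V_ext. apply rho_appw_ext. intros j Hj. rewrite rho2_AA by auto.
  unfold e1, flip. rewrite length_rhoL, Hpar. destruct (Nat.even (length u)); unfold ONE; split; auto.
Qed.

Fixpoint kapL (e : bool) (s : list bool) : list bool :=
  match s with
  | [] => []
  | x :: s' => if Bool.eqb x (negb e) then true :: kapL (negb e) s' else false :: true :: kapL e s'
  end.

Lemma rhoL_kapL s : forall e, rhoL e (kapL e s) = s.
Proof.
  induction s as [|x s IH]; intro e; simpl; auto.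
  destruct (Bool.eqb x (negb e)) eqn:E; simpl.
  - rewrite IH. apply Bool.eqb_prop in E. subst. auto.
  - rewrite negb_involutive, IH. destruct x, e; simpl in *; auto; discriminate.
Qed.

Lemma rhoL_app l1 : forall l2 e, rhoL e (l1 ++ l2) = rhoL e l1 ++ rhoL (flip (length l1) e) l2.
Proof.
  induction l1 as [|a l1 IH]; intros l2 e; simpl; auto.
  rewrite flip_S. destruct a; simpl; rewrite IH; auto.
Qed.

Lemma rhoL_false l e : rhoL e (l ++ [false]) = rhoL e l.
Proof. rewrite rhoL_app. simpl. rewrite app_nil_r. auto. Qed.

Lemma onesL_le l : (onesL l <= length l)%nat.
Proof. induction l as [|a l IH]; simpl; auto. destruct a; simpl; lia. Qed.

Lemma shrink w : w <> [] -> (length (rhoL true (rhoL true w)) < length w)%nat.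
Proof.
  intro Hw. rewrite length_rhoL. destruct w as [|a w]; [contradiction|].
  destruct a; simpl.
  - pose proof (onesL_le (rhoL false w)). rewrite length_rhoL in H. pose proof (onesL_le w). lia.
  - pose proof (onesL_le (rhoL false w)). rewrite length_rhoL in H. pose proof (onesL_le w). lia.
Qed.

Lemma in_orbit_R2 x y : in_orbit (Rmap (Rmap x)) y -> in_orbit x y.
Proof. intros [k Hk]. exists (S (S k)). rewrite !Nat.iter_succ_r. auto. Qed.

Lemma half_orbit0' : in_orbit (V (wcons false ONE)) 0.
Proof.
  exists 2%nat. simpl Nat.iter. rewrite RB by (apply IM_wcons, IM_ONE).
  rewrite (V_ext (rho (wcons false ONE)) AF). rewrite V_AF. apply Rmap23.
  intros n Hn. apply Bool.eq_iff_eq_true. rewrite rho_iff, rho2_wcons_false, rho2_ONE by auto.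
  unfold AA, AF. destruct (Nat.even n); simpl; split; intro; auto; discriminate.
Qed.

Lemma half_orbit0 : in_orbit (V (appw [false] ONE)) 0.
Proof. change (appw [false] ONE) with (wcons false ONE). apply half_orbit0'. Qed.



Lemma dens_words n : forall w, (length w <= n)%nat ->
  (exists z, in_orbit (V (appw (w ++ z) ONE)) 0) /\ (exists z, in_orbit (V (appw (w ++ z) ONE)) 1).
Proof.
  induction n as [|n IH]; intros w Hw.
  - destruct w; simpl in Hw; [|lia]. split.
    + exists [false]. apply half_orbit0.
    + exists []. exists 0%nat. simpl. apply V_ONE.
  - destruct (Nat.le_gt_cases (length w) n) as [Hle|Hgt]; [apply IH; auto|].
    assert (Hne : w <> []) by (intro; subst; simpl in Hgt; lia).
    set (w2 := rhoL true (rhoL true w)).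
    assert (H2 : (length w2 <= n)%nat) by (pose proof (shrink w Hne); unfold w2; lia).
    assert (Key : forall z2, exists z,
      Rmap (Rmap (V (appw (w ++ z) ONE))) = V (appw (w2 ++ z2) ONE)).
    { intro z2. set (e1 := flip (length w) true). set (e2 := flip (length (rhoL true w)) true).
      set (z1 := kapL e1 (kapL e2 z2)).
      assert (Ez : rhoL true (rhoL true (w ++ z1)) = w2 ++ z2).
      { rewrite rhoL_app. fold e1. unfold z1. rewrite rhoL_kapL, rhoL_app. fold e2.
        rewrite rhoL_kapL. auto. }
      destruct (Bool.bool_dec (Nat.even (onesL (w ++ z1))) (Nat.even (length (w ++ z1)))) as [Hp|Hp].
      - exists z1. rewrite R2_dyadic by auto. rewrite Ez. auto.
      - exists (z1 ++ [false]). rewrite app_assoc. rewrite R2_dyadic.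
        + rewrite rhoL_false, Ez. auto.
        + rewrite <- (length_rhoL _ true), rhoL_false, length_rhoL, length_app. simpl length.
          rewrite Nat.add_1_r, Nat.even_succ, <- Nat.negb_even.
          destruct (Nat.even (onesL (w ++ z1))), (Nat.even (length (w ++ z1))); simpl in *; auto; congruence. }
    destruct (IH w2 H2) as [[z0 H0] [z1 H1]].
    destruct (Key z0) as [z0' E0]. destruct (Key z1) as [z1' E1].
    split; [exists z0'| exists z1']; apply in_orbit_R2; [rewrite E0| rewrite E1]; auto.
Qed.

Lemma binword n : forall k, (k < 2 ^ n)%nat -> exists w, length w = n /\
  forall t, V (appw w t) = (INR k + V t) / 2 ^ n.
Proof.
  induction n as [|n IH]; intros k Hk.
  - exists []. split; auto. intro t. simpl in Hk. assert (k = 0%nat) by lia. subst.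
    change (V t = (INR 0 + V t) / 2 ^ 0). rewrite INR_0, pow_O. field.
  - assert (Hp : 0 < 2 ^ n) by (apply pow_lt; lra).
    destruct (Nat.lt_ge_cases k (2 ^ n)) as [Hl|Hl].
    + destruct (IH k Hl) as [w [Hw HV]]. exists (false :: w). split; [simpl; auto|].
      intro t. simpl appw. rewrite V_wcons, HV. simpl. field. lra.
    + assert (Hk' : (k - 2 ^ n < 2 ^ n)%nat) by (simpl in Hk; lia).
      destruct (IH _ Hk') as [w [Hw HV]]. exists (true :: w). split; [simpl; auto|].
      intro t. simpl appw. rewrite V_wcons, HV. rewrite minus_INR by lia. rewrite pow_INR.
      change (INR 2) with 2. change (2 ^ S n) with (2 * 2 ^ n). field. lra.
Qed.

Lemma Qset_appw u : Qset (V (appw u ONE)).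
Proof.
  apply Qset_V. apply (isQ_EP (length u) _ 1); [lia|].
  intros n Hn. rewrite !V_appw_bound by lia. auto.
Qed.

Lemma dense_gen (T : R -> Prop) : (forall w, exists z, T (V (appw (w ++ z) ONE))) ->
  forall a b, 0 <= a -> a < b -> b <= 1 -> exists x, a < x < b /\ T x /\ Qset x.
Proof.
  intros HT a b Ha Hab Hb.
  destruct (pow_lt_1_zero (/2) ltac:(rewrite Rabs_pos_eq; lra) ((b - a) / 2) ltac:(lra)) as [n Hn].
  specialize (Hn n ltac:(lia)). rewrite pow_inv, Rabs_pos_eq in Hn
    by (apply Rlt_le, Rinv_0_lt_compat, pow_lt; lra).
  assert (Hh : 0 < 2 ^ n) by (apply pow_lt; lra). remember (2 ^ n) as hh eqn:Ehh.
  assert (Hbh : 2 < (b - a) * hh).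
  { apply Rmult_lt_compat_r with (r := hh) in Hn; auto. rewrite Rinv_l in Hn by lra. lra. }
  destruct (archimed (a * hh)) as [K1 K2]. set (K := up (a * hh)) in *.
  assert (HK0 : (0 <= K)%Z) by (apply le_IZR; pose proof (Rmult_le_pos a hh Ha ltac:(lra)); lra).
  set (k := Z.to_nat K).
  assert (Hk : INR k = IZR K) by (unfold k; rewrite INR_IZR_INZ, Znat.Z2Nat.id; auto).
  assert (Hklt : (k < 2 ^ n)%nat).
  { apply INR_lt. rewrite pow_INR. change (INR 2) with 2. rewrite <- Ehh.
    rewrite Hk. nra. }
  destruct (binword n k Hklt) as [w [Hw HV]].
  destruct (HT w) as [z Hz]. exists (V (appw (w ++ z) ONE)).
  rewrite appw_app, HV in *. rewrite <- Ehh in *.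
  pose proof (V_pos _ (IM_appw z ONE IM_ONE)). pose proof (V_le1 (appw z ONE)).
  split; [|split; auto].
  - rewrite Hk. split.
    + apply Rmult_lt_reg_r with hh; auto. unfold Rdiv. rewrite Rmult_assoc, Rinv_l, Rmult_1_r by lra. lra.
    + apply Rmult_lt_reg_r with hh; auto. unfold Rdiv. rewrite Rmult_assoc, Rinv_l, Rmult_1_r by lra. nra.
  - rewrite <- HV, <- appw_app. apply Qset_appw.
Qed.

Lemma orbit_C0 k : forall z, (z = 0 \/ z = 2/3) -> Nat.iter k Rmap z = 0 \/ Nat.iter k Rmap z = 2/3.
Proof.
  induction k as [|k IH]; intros z Hz; simpl; auto.
  destruct (IH z Hz) as [E|E]; rewrite E; [rewrite Rmap0| rewrite Rmap23]; auto.
Qed.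
Lemma orbit_C1 k : forall z, (z = 1 \/ z = 1/3) -> Nat.iter k Rmap z = 1 \/ Nat.iter k Rmap z = 1/3.
Proof.
  induction k as [|k IH]; intros z Hz; simpl; auto.
  destruct (IH z Hz) as [E|E]; rewrite E; [rewrite Rmap1| rewrite Rmap13]; auto.
Qed.

Lemma iter_split a c x : (a <= c)%nat -> Nat.iter c Rmap x = Nat.iter (c - a) Rmap (Nat.iter a Rmap x).
Proof. intro H. rewrite <- Nat.iter_add. f_equal. lia. Qed.

Lemma reach_Q x : Qset x -> reach x -> Qset0 x \/ Qset1 x.
Proof.
  intros Hq [k [Hk|Hk]].
  - left. split; auto. split; [exists k; auto|]. exists (S k). simpl. rewrite Hk. apply Rmap0.
  - right. split; auto. split; [exists k; auto|]. exists (S k). simpl. rewrite Hk. apply Rmap1.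
Qed.

Lemma iter_period x n : Nat.iter n Rmap x = x -> forall j, Nat.iter (n * j) Rmap x = x.
Proof.
  intros H j. induction j; [rewrite Nat.mul_0_r; auto|].
  rewrite Nat.mul_succ_r, Nat.iter_add, H. auto.
Qed.

Theorem proposition6p3 :
  (forall x, Qset x -> Qset (Rmap x)) /\
  (Rmap 0 = 2/3 /\ Rmap (2/3) = 0 /\ Rmap 1 = 1/3 /\ Rmap (1/3) = 1) /\
  (forall x (n : nat), (1 <= n)%nat -> Nat.iter n Rmap x = x ->
     (forall k : nat, Qset (Nat.iter k Rmap x)) ->
     (forall y, in_orbit x y <-> (y = 0 \/ y = 2/3)) \/
     (forall y, in_orbit x y <-> (y = 1 \/ y = 1/3))) /\
  (forall x, Qset x <-> (Qset0 x \/ Qset1 x)) /\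
  (forall x, ~ (Qset0 x /\ Qset1 x)) /\
  (forall a b, 0 <= a -> a < b -> b <= 1 -> exists x, a < x < b /\ Qset0 x) /\
  (forall a b, 0 <= a -> a < b -> b <= 1 -> exists x, a < x < b /\ Qset1 x).
Proof.
  split; [exact invariance|].
  split; [split; [exact Rmap0| split; [exact Rmap23| split; [exact Rmap1| exact Rmap13]]]|].
  split.
  { intros x n Hn Hper Hall. pose proof (Hall 0%nat) as Hq. simpl in Hq.
    destruct (rat_reach x Hq) as [k Hk].
    assert (Hx : x = Nat.iter (n * k - k) Rmap (Nat.iter k Rmap x)).
    { rewrite <- iter_split by nia. symmetry. apply iter_period. auto. }
    destruct Hk as [Hk|Hk]; rewrite Hk in Hx.
    - left. assert (Hx' : x = 0 \/ x = 2/3) by (rewrite Hx; apply orbit_C0; auto).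
      intro y. split.
      + intros [j Hj]. rewrite <- Hj. apply orbit_C0. auto.
      + intros [-> | ->]; destruct Hx' as [-> | ->].
        * exists 0%nat. auto.
        * exists 1%nat. simpl. apply Rmap23.
        * exists 1%nat. simpl. apply Rmap0.
        * exists 0%nat. auto.
    - right. assert (Hx' : x = 1 \/ x = 1/3) by (rewrite Hx; apply orbit_C1; auto).
      intro y. split.
      + intros [j Hj]. rewrite <- Hj. apply orbit_C1. auto.
      + intros [-> | ->]; destruct Hx' as [-> | ->].
        * exists 0%nat. auto.
        * exists 1%nat. simpl. apply Rmap13.
        * exists 1%nat. simpl. apply Rmap1.
        * exists 0%nat. auto. }
  split.
  { intro x. split.
    - intro Hq. apply reach_Q; auto. apply rat_reach; auto.
    - intros [[H _]|[H _]]; auto. }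
  split.
  { intros x [[_ [[a Ha] _]] [_ [[c Hc] _]]].
    destruct (Nat.le_gt_cases a c) as [H|H].
    - rewrite (iter_split a c x H), Ha in Hc. destruct (orbit_C0 (c - a) 0 (or_introl eq_refl)); lra.
    - rewrite (iter_split c a x ltac:(lia)), Hc in Ha. destruct (orbit_C1 (a - c) 1 (or_introl eq_refl)); lra. }
  split.
  - intros a b Ha Hab Hb.
    destruct (dense_gen (fun x => in_orbit x 0)) with a b as [x [Hx [Ho Hq]]]; auto.
    { intro w. destruct (dens_words (length w) w (le_n _)) as [H _]. exact H. }
    exists x. split; auto. split; auto. split; auto. destruct Ho as [k Hk].
    exists (S k). simpl. rewrite Hk. apply Rmap0.
  - intros a b Ha Hab Hb.
    destruct (dense_gen (fun x => in_orbit x 1)) with a b as [x [Hx [Ho Hq]]]; auto.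
    { intro w. destruct (dens_words (length w) w (le_n _)) as [_ H]. exact H. }
    exists x. split; auto. split; auto. split; auto. destruct Ho as [k Hk].
    exists (S k). simpl. rewrite Hk. apply Rmap1.
Qed.
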